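(* For all positive integers $n$ and every $2$-homogeneous polynomial $P(x)=\sum_{|\alpha|=2}a_\alpha\mathbf{x}^\alpha$ on $\ell_2^n$ (over $\mathbb{K}=\mathbb{R}$ or $\mathbb{C}$), \[ \max_{|\alpha|=2}|a_\alpha|\leq 4\sqrt2\,\|P\|. \] Moreover, this is optimal in the following sense: for every $r<\infty$ there is no constant $C\ge1$ (independent of $n$) such that $\big(\sum_{|\alpha|=2}|a_\alpha|^r\big)^{1/r}\le C\|P\|$ for all $2$-homogeneous polynomials $P=\sum_{|\alpha|=2}a_\alpha\mathbf{x}^\alpha$ on $\ell_2^n$ and all $n$.
   Context: $\mathbb{K}$ denotes $\mathbb{R}$ or $\mathbb{C}$. For $\alpha\in\mathbb{N}^n$, $|\alpha|=\alpha_1+\cdots+\alpha_n$ and $\mathbf{x}^\alpha=x_1^{\alpha_1}\cdots x_n^{\alpha_n}$. $\ell_p^n$ is $\mathbb{K}^n$ with the $p$-norm, and for a polynomial $P$ on $\ell_p^n$, $\|P\|=\sup\{|P(x)|:\|x\|_p\le1\}$. *)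

(* Defs.v *)
(* real analysis over Stdlib's R.
   The scalar field K is R or C; we model C as R*R and K as the subset of
   C given by the flag [cplx] (cplx = false: real numbers, i.e. imaginary part 0). *)
From Stdlib Require Import Reals.
Open Scope R_scope.

Definition Cx : Type := (R * R)%type.
Definition C0 : Cx := (0, 0).
Definition Cadd (z w : Cx) : Cx := (fst z + fst w, snd z + snd w).
Definition Cmul (z w : Cx) : Cx :=
  (fst z * fst w - snd z * snd w, fst z * snd w + snd z * fst w).
Definition Cabs (z : Cx) : R := sqrt (fst z ^ 2 + snd z ^ 2).

Definition inK (cplx : bool) (z : Cx) : Prop := cplx = true \/ snd z = 0.

Fixpoint Csum (n : nat) (f : nat -> Cx) : Cx :=
  match n with O => C0 | S m => Cadd (Csum m f) (f m) end.
Fixpoint Rsum (n : nat) (f : nat -> R) : R :=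
  match n with O => 0 | S m => Rsum m f + f m end.

(* A 2-homogeneous polynomial on K^n is given by its coefficients
   a i j, (i <= j < n), the coefficient of the monomial x_i x_j
   (multi-indices alpha with |alpha| = 2 <-> pairs i <= j). *)
Definition poly2_eval (n : nat) (a : nat -> nat -> Cx) (x : nat -> Cx) : Cx :=
  Csum n (fun j => Csum (S j) (fun i => Cmul (a i j) (Cmul (x i) (x j)))).

Definition l2norm (n : nat) (x : nat -> Cx) : R :=
  sqrt (Rsum n (fun i => Cabs (x i) ^ 2)).

Definition is_poly2_norm (cplx : bool) (n : nat) (a : nat -> nat -> Cx) (N : R) : Prop :=
  is_lub (fun y => exists x : nat -> Cx,
            (forall i, (i < n)%nat -> inK cplx (x i)) /\
            l2norm n x <= 1 /\ y = Cabs (poly2_eval n a x)) N.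

Definition coeffs_in_K (cplx : bool) (n : nat) (a : nat -> nat -> Cx) : Prop :=
  forall i j, (i <= j)%nat -> (j < n)%nat -> inK cplx (a i j).

(* real power t^s for t >= 0, s > 0, with the convention 0^s = 0 *)
Definition rpow (t s : R) : R :=
  match Rlt_dec 0 t with left _ => Rpower t s | right _ => 0 end.

Definition coeff_lr_norm (r : R) (n : nat) (a : nat -> nat -> Cx) : R :=
  rpow (Rsum n (fun j => Rsum (S j) (fun i => rpow (Cabs (a i j)) r))) (1 / r).

(* Main.v *)
Require Import Defs.
From Stdlib Require Import Reals Lra Lia Psatz.
From Coquelicot Require Import Coquelicot.
Open Scope R_scope.

Lemma Cabs_add z w : Cabs (Cadd z w) <= Cabs z + Cabs w.
Proof. exact (Cmod_triangle z w). Qed.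
Lemma Cabs_mul z w : Cabs (Cmul z w) = Cabs z * Cabs w.
Proof. exact (Cmod_mult z w). Qed.
Lemma Cabs_ge0 z : 0 <= Cabs z.
Proof. apply sqrt_pos. Qed.
Definition Cneg (z : Cx) : Cx := (- fst z, - snd z).
Lemma Cabs_neg z : Cabs (Cneg z) = Cabs z.
Proof. exact (Cmod_opp z). Qed.
Lemma Cabs_sq z : Cabs z ^ 2 = fst z ^ 2 + snd z ^ 2.
Proof. unfold Cabs. rewrite pow2_sqrt; [reflexivity|nra]. Qed.
Lemma Cabs_C0 : Cabs C0 = 0.
Proof. unfold Cabs, C0; cbn [fst snd]. replace (0 ^ 2 + 0 ^ 2) with 0 by ring. apply sqrt_0. Qed.
Lemma Cabs_real1 : Cabs (1, 0) = 1.
Proof. unfold Cabs; cbn [fst snd]. replace (1 ^ 2 + 0 ^ 2) with 1 by ring. apply sqrt_1. Qed.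

Lemma Cadd_0l z : Cadd C0 z = z.
Proof. destruct z; unfold Cadd, C0; simpl; f_equal; ring. Qed.
Lemma Cadd_0r z : Cadd z C0 = z.
Proof. destruct z; unfold Cadd, C0; simpl; f_equal; ring. Qed.
Lemma Cmul_0r z : Cmul z C0 = C0.
Proof. destruct z; unfold Cmul, C0; simpl; f_equal; ring. Qed.
Lemma Cmul_0l z : Cmul C0 z = C0.
Proof. destruct z; unfold Cmul, C0; simpl; f_equal; ring. Qed.

Lemma Csum_zero n f : (forall k, (k < n)%nat -> f k = C0) -> Csum n f = C0.
Proof.
  induction n; intros H; simpl; [reflexivity|].
  rewrite IHn by (intros; apply H; lia). rewrite H by lia. apply Cadd_0l.
Qed.

Lemma Csum_one n f m : (m < n)%nat ->
  (forall k, (k < n)%nat -> k <> m -> f k = C0) -> Csum n f = f m.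
Proof.
  induction n; intros Hm H; [lia|]. simpl.
  destruct (Nat.eq_dec m n).
  - subst. rewrite Csum_zero. apply Cadd_0l. intros; apply H; lia.
  - rewrite IHn by (try lia; intros; apply H; lia). rewrite (H n) by lia. apply Cadd_0r.
Qed.

Lemma Csum_two n f m1 m2 : (m1 < m2)%nat -> (m2 < n)%nat ->
  (forall k, (k < n)%nat -> k <> m1 -> k <> m2 -> f k = C0) ->
  Csum n f = Cadd (f m1) (f m2).
Proof.
  induction n; intros H1 H2 H; [lia|]. simpl.
  destruct (Nat.eq_dec m2 n).
  - subst. rewrite (Csum_one n f m1) by (try lia; intros; apply H; lia). reflexivity.
  - rewrite IHn by (try lia; intros; apply H; lia). rewrite (H n) by lia. apply Cadd_0r.
Qed.

Lemma Rsum_zero n f : (forall k, (k < n)%nat -> f k = 0) -> Rsum n f = 0.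
Proof.
  induction n; intros H; simpl; [reflexivity|].
  rewrite IHn by (intros; apply H; lia). rewrite H by lia. ring.
Qed.

Lemma Rsum_one n f m : (m < n)%nat ->
  (forall k, (k < n)%nat -> k <> m -> f k = 0) -> Rsum n f = f m.
Proof.
  induction n; intros Hm H; [lia|]. simpl.
  destruct (Nat.eq_dec m n).
  - subst. rewrite Rsum_zero. ring. intros; apply H; lia.
  - rewrite IHn by (try lia; intros; apply H; lia). rewrite (H n) by lia. ring.
Qed.

Lemma Rsum_two n f m1 m2 : (m1 < m2)%nat -> (m2 < n)%nat ->
  (forall k, (k < n)%nat -> k <> m1 -> k <> m2 -> f k = 0) ->
  Rsum n f = f m1 + f m2.
Proof.
  induction n; intros H1 H2 H; [lia|]. simpl.
  destruct (Nat.eq_dec m2 n).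
  - subst. rewrite (Rsum_one n f m1) by (try lia; intros; apply H; lia). reflexivity.
  - rewrite IHn by (try lia; intros; apply H; lia). rewrite (H n) by lia. ring.
Qed.

Lemma Rsum_nonneg n f : (forall k, 0 <= f k) -> 0 <= Rsum n f.
Proof. induction n; intros H; simpl; [lra|]. specialize (IHn H). specialize (H n). lra. Qed.

Definition vec1 (i : nat) : nat -> Cx :=
  fun k => if Nat.eq_dec k i then (1, 0) else C0.
Definition vec2 (i j : nat) (s t : R) : nat -> Cx :=
  fun k => if Nat.eq_dec k i then (s, 0) else if Nat.eq_dec k j then (t, 0) else C0.

Lemma eval1 n a i : (i < n)%nat ->
  poly2_eval n a (vec1 i) = Cmul (a i i) (Cmul (1, 0) (1, 0)).
Proof.
  intros Hi. unfold poly2_eval.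
  rewrite (Csum_one n _ i Hi).
  - rewrite (Csum_one (S i) _ i ltac:(lia)).
    + unfold vec1. destruct (Nat.eq_dec i i); [reflexivity|congruence].
    + intros k Hk Hki. unfold vec1. destruct (Nat.eq_dec k i); [lia|].
      rewrite Cmul_0l. apply Cmul_0r.
  - intros k Hk Hki. apply Csum_zero. intros l Hl.
    unfold vec1 at 2. destruct (Nat.eq_dec k i); [lia|]. rewrite !Cmul_0r. reflexivity.
Qed.

Lemma eval2 n a i j s t : (i < j)%nat -> (j < n)%nat ->
  poly2_eval n a (vec2 i j s t) =
  Cadd (Cmul (a i i) (Cmul (s, 0) (s, 0)))
       (Cadd (Cmul (a i j) (Cmul (s, 0) (t, 0))) (Cmul (a j j) (Cmul (t, 0) (t, 0)))).
Proof.
  intros Hij Hj. unfold poly2_eval.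
  rewrite (Csum_two n _ i j Hij Hj).
  - rewrite (Csum_one (S i) _ i ltac:(lia)).
    + rewrite (Csum_two (S j) _ i j ltac:(lia) ltac:(lia)).
      * unfold vec2. destruct (Nat.eq_dec i i); [|congruence].
        destruct (Nat.eq_dec j i); [lia|]. destruct (Nat.eq_dec j j); [|congruence].
        reflexivity.
      * intros k Hk H1 H2. unfold vec2 at 1.
        destruct (Nat.eq_dec k i); [lia|]. destruct (Nat.eq_dec k j); [lia|].
        rewrite Cmul_0l. apply Cmul_0r.
    + intros k Hk Hki. unfold vec2 at 1. destruct (Nat.eq_dec k i); [lia|].
      destruct (Nat.eq_dec k j); [lia|]. rewrite Cmul_0l. apply Cmul_0r.
  - intros k Hk H1 H2. apply Csum_zero. intros l Hl.
    unfold vec2 at 2. destruct (Nat.eq_dec k i); [lia|]. destruct (Nat.eq_dec k j); [lia|].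
    rewrite !Cmul_0r. reflexivity.
Qed.

Lemma part1 (cplx : bool) (n : nat) (a : nat -> nat -> Cx) (N : R) :
  (1 <= n)%nat -> coeffs_in_K cplx n a -> is_poly2_norm cplx n a N ->
  forall i j : nat, (i <= j)%nat -> (j < n)%nat -> Cabs (a i j) <= 4 * sqrt 2 * N.
Proof.
  intros _ _ [Hub _] i j Hij Hjn.
  assert (HN : forall x, (forall k, (k < n)%nat -> inK cplx (x k)) -> l2norm n x <= 1 ->
              Cabs (poly2_eval n a x) <= N).
  { intros x H1 H2. apply Hub. exists x. auto. }
  assert (s2 : 1 <= sqrt 2).
  { rewrite <- sqrt_1. apply sqrt_le_1_alt. lra. }
  destruct (Nat.eq_dec i j) as [<-|Hne].
  - assert (H := HN (vec1 i)).
    rewrite eval1 in H by lia. rewrite !Cabs_mul, Cabs_real1 in H.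
    assert (H' : Cabs (a i i) <= N).
    { replace (Cabs (a i i)) with (Cabs (a i i) * (1 * 1)) by ring. apply H.
      - intros k _. right. unfold vec1. destruct (Nat.eq_dec k i); reflexivity.
      - unfold l2norm. rewrite (Rsum_one n _ i) by (lia || (intros k _ Hk;
          unfold vec1; destruct (Nat.eq_dec k i); [lia|]; rewrite Cabs_C0; ring)).
        unfold vec1. destruct (Nat.eq_dec i i); [|congruence].
        rewrite Cabs_real1. replace (1 ^ 2) with 1 by ring. rewrite sqrt_1. lra. }
    pose proof (Cabs_ge0 (a i i)). nra.
  - assert (Hlt : (i < j)%nat) by lia.
    set (h := / sqrt 2).
    assert (hh : h * h = / 2).
    { unfold h. rewrite <- Rinv_mult, sqrt_sqrt; lra. }
    assert (Hnorm : forall t, t * t = / 2 -> l2norm n (vec2 i j h t) <= 1).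
    { intros t Ht. unfold l2norm.
      rewrite (Rsum_two n _ i j) by (lia || (intros k _ H1 H2;
          unfold vec2; destruct (Nat.eq_dec k i); [lia|];
          destruct (Nat.eq_dec k j); [lia|]; rewrite Cabs_C0; ring)).
      unfold vec2. destruct (Nat.eq_dec i i); [|congruence].
      destruct (Nat.eq_dec j i); [lia|]. destruct (Nat.eq_dec j j); [|congruence].
      rewrite !Cabs_sq; cbn [fst snd]. replace (h ^ 2 + 0 ^ 2 + (t ^ 2 + 0 ^ 2)) with 1 by nra.
      rewrite sqrt_1. lra. }
    assert (HK : forall t, forall k, (k < n)%nat -> inK cplx (vec2 i j h t k)).
    { intros t k _. right. unfold vec2. destruct (Nat.eq_dec k i); [reflexivity|].
      destruct (Nat.eq_dec k j); reflexivity. }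
    assert (Hp := HN _ (HK h) (Hnorm h hh)).
    assert (Hm := HN _ (HK (- h)) (Hnorm (- h) ltac:(nra))).
    assert (E : a i j = Cadd (poly2_eval n a (vec2 i j h h)) (Cneg (poly2_eval n a (vec2 i j h (- h))))).
    { rewrite !eval2 by lia.
      assert (E2 : forall u : R, u = u * (2 * (h * h))) by (intro; rewrite hh; field).
      destruct (a i i) as [p q], (a i j) as [u v], (a j j) as [w z].
      unfold Cadd, Cmul, Cneg; simpl. f_equal.
      - rewrite (E2 u) at 1. ring.
      - rewrite (E2 v) at 1. ring. }
    rewrite E.
    eapply Rle_trans; [apply Cabs_add|]. rewrite Cabs_neg.
    pose proof (Cabs_ge0 (poly2_eval n a (vec2 i j h h))). nra.
Qed.

Definition a0 : nat -> nat -> Cx := fun i j => if Nat.eq_dec i j then (1, 0) else C0.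

Lemma eval_bound n x : Cabs (poly2_eval n a0 x) <= Rsum n (fun k => Cabs (x k) ^ 2).
Proof.
  unfold poly2_eval. induction n.
  - simpl. rewrite Cabs_C0. lra.
  - change (Csum (S n) ?F) with (Cadd (Csum n F) (F n)).
    change (Rsum (S n) ?F) with (Rsum n F + F n).
    eapply Rle_trans; [apply Cabs_add|].
    rewrite (Csum_one (S n) _ n) by (lia || (intros k _ Hk; unfold a0;
       destruct (Nat.eq_dec k n); [lia|]; apply Cmul_0l)).
    assert (Ha : a0 n n = (1, 0)) by (unfold a0; destruct (Nat.eq_dec n n); [reflexivity|congruence]).
    rewrite Ha, !Cabs_mul, Cabs_real1. nra.
Qed.

Lemma rpow1 r : rpow 1 r = 1.
Proof.
  unfold rpow. destruct (Rlt_dec 0 1); [|lra].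
  unfold Rpower. rewrite ln_1, Rmult_0_r. apply exp_0.
Qed.

Lemma coeff_sum n r : Rsum n (fun j => Rsum (S j) (fun i => rpow (Cabs (a0 i j)) r)) = INR n.
Proof.
  induction n; [reflexivity|].
  change (Rsum (S n) ?F) with (Rsum n F + F n).
  rewrite IHn. rewrite (Rsum_one (S n) _ n) by (lia || (intros k _ Hk; unfold a0;
       destruct (Nat.eq_dec k n); [lia|]; rewrite Cabs_C0; unfold rpow;
       destruct (Rlt_dec 0 0); [lra|reflexivity])).
  assert (Ha : a0 n n = (1, 0)) by (unfold a0; destruct (Nat.eq_dec n n); [reflexivity|congruence]).
  rewrite Ha, Cabs_real1, rpow1. rewrite S_INR. ring.
Qed.

Lemma part2 (cplx : bool) (r : R) : 0 < r ->
  ~ (exists C : R, 1 <= C /\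
       forall (n : nat) (a : nat -> nat -> Cx) (N : R),
         (1 <= n)%nat -> coeffs_in_K cplx n a -> is_poly2_norm cplx n a N ->
         coeff_lr_norm r n a <= C * N).
Proof.
  intros Hr [C [HC H]].
  destruct (INR_archimed 1 (exp (r * ln C)) ltac:(lra)) as [m Hm].
  set (n := S m).
  assert (Hn : exp (r * ln C) < INR n).
  { unfold n. rewrite S_INR. lra. }
  set (E := fun y => exists x : nat -> Cx,
            (forall i, (i < n)%nat -> inK cplx (x i)) /\
            l2norm n x <= 1 /\ y = Cabs (poly2_eval n a0 x)).
  assert (Hb : is_upper_bound E 1).
  { intros y [x [_ [Hx ->]]]. eapply Rle_trans; [apply eval_bound|].
    unfold l2norm in Hx.
    set (S0 := Rsum n (fun k => Cabs (x k) ^ 2)) in *.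
    assert (0 <= S0) by (apply Rsum_nonneg; intros; apply pow2_ge_0).
    rewrite <- (pow2_sqrt S0) by lra. pose proof (sqrt_pos S0). nra. }
  destruct (completeness E) as [N HN].
  - exists 1. exact Hb.
  - exists (Cabs (poly2_eval n a0 (fun _ => C0))). exists (fun _ => C0).
    split; [intros; right; reflexivity|]. split; [|reflexivity].
    unfold l2norm. rewrite Rsum_zero. rewrite sqrt_0; lra.
    intros; rewrite Cabs_C0; ring.
  - assert (HN1 : N <= 1) by (apply HN; exact Hb).
    assert (Hc : coeffs_in_K cplx n a0).
    { intros i j _ _. right. unfold a0. destruct (Nat.eq_dec i j); reflexivity. }
    specialize (H n a0 N ltac:(unfold n; lia) Hc HN).
    unfold coeff_lr_norm in H. rewrite coeff_sum in H.
    assert (Hpos : 0 < INR n) by (unfold n; rewrite S_INR; pose proof (pos_INR m); lra).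
    unfold rpow in H. destruct (Rlt_dec 0 (INR n)); [|lra].
    assert (Hl : r * ln C < ln (INR n)).
    { rewrite <- (ln_exp (r * ln C)). apply ln_increasing; [apply exp_pos|exact Hn]. }
    assert (Hg : C < Rpower (INR n) (1 / r)).
    { unfold Rpower. rewrite <- (exp_ln C) at 1 by lra. apply exp_increasing.
      apply (Rmult_lt_reg_l r); [lra|]. replace (r * (1 / r * ln (INR n))) with (ln (INR n)) by (field; lra).
      lra. }
    nra.
Qed.

Theorem proposition2 (cplx : bool) :
  (forall (n : nat) (a : nat -> nat -> Cx) (N : R),
     (1 <= n)%nat -> coeffs_in_K cplx n a -> is_poly2_norm cplx n a N ->
     forall i j : nat, (i <= j)%nat -> (j < n)%nat ->
       Cabs (a i j) <= 4 * sqrt 2 * N)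
  /\
  (forall r : R, 0 < r ->
     ~ (exists C : R, 1 <= C /\
          forall (n : nat) (a : nat -> nat -> Cx) (N : R),
            (1 <= n)%nat -> coeffs_in_K cplx n a -> is_poly2_norm cplx n a N ->
            coeff_lr_norm r n a <= C * N)).
Proof.
  split; [apply part1|apply part2].
Qed.
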